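(* For $\theta\in(0,1)$ define $P_0(\theta)=1-\theta$, $P_r(\theta)=r(1-\theta)\sum_{i=r}^{\infty}\frac{\theta^i}{i}$ for integers $r\ge1$, and $P(\theta)=\max_{r\ge 0}P_r(\theta)$. Let $E_1(x)=\int_x^\infty \frac{e^{-t}}{t}\,dt$ for $x>0$, let $F(x)=xE_1(x)$, let $\alpha\in(0,\infty)$ be the point where $F$ attains its maximum on $(0,\infty)$ (so $F'(\alpha)=0$), and let $\beta=F(\alpha)$ (numerically $\alpha\approx 0.434818$, $\beta\approx 0.281494$). Then as $\theta\to 1^-$, the optimal strategy approaches the positional strategy rejecting $\frac{\alpha}{1-\theta}$ initial candidates: if $r^*(\theta)$ denotes an index attaining $P(\theta)=P_{r^*(\theta)}(\theta)$, then $(1-\theta)\,r^*(\theta)\to\alpha$, and \[ \lim_{\theta\to 1^-}P(\theta)=\beta. \]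
   Context: Here $P_r(\theta)$ is the limit as $N\to\infty$ of the probability of winning the weighted game of best choice with the $r$-positional strategy: a permutation $\pi$ of $\{1,\dots,N\}$ is drawn with probability proportional to $\theta^{\pi^{-1}(N)-1}$, the player rejects the first $r$ candidates and then accepts the next candidate better than all previous ones, and wins if the accepted candidate has rank $N$ (best). *)

(* Defs.v *)
From Stdlib Require Import Reals.
From Coquelicot Require Import Coquelicot.
Open Scope R_scope.

Definition Pr (r : nat) (th : R) : R :=
  match r with
  | O => 1 - th
  | S _ => INR r * (1 - th) * Series (fun k => th ^ (k + r) / INR (k + r))
  end.

(* P(theta) = max_{r >= 0} P_r(theta), taken as the supremum of the values
   (which the theorem also shows is attained). *)
Definition Pmax (th : R) : R := real (Sup_seq (fun r => Pr r th)).

Definition E1 (x : R) : R :=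
  RInt_gen (fun t => exp (- t) / t) (at_point x) (Rbar_locally p_infty).

Definition F (x : R) : R := x * E1 x.

(* Main.v *)
Require Import Defs.
From Stdlib Require Import Reals Lra Lia ZArith.
From Coquelicot Require Import Coquelicot.
Open Scope R_scope.

Definition g (t : R) : R := exp (- t) / t.

Lemma g_derive t : 0 < t -> ex_derive g t.
Proof. intros Ht. unfold g. auto_derive. lra. Qed.

Lemma g_cont t : 0 < t -> continuous g t.
Proof. intros Ht. apply (ex_derive_continuous (K:=R_AbsRing) (V:=R_NormedModule) g), g_derive; auto. Qed.

Lemma g_pos t : 0 < t -> 0 < g t.
Proof. intros Ht. unfold g. apply Rdiv_lt_0_compat; auto. apply exp_pos. Qed.

Lemma g_decr x y : 0 < x -> x <= y -> g y <= g x.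
Proof.
  intros Hx Hxy. unfold g, Rdiv.
  apply Rmult_le_compat.
  - left; apply exp_pos.
  - left; apply Rinv_0_lt_compat; lra.
  - destruct (Req_dec x y). subst; lra. left; apply exp_increasing; lra.
  - apply Rinv_le_contravar; lra.
Qed.

Lemma g_exRInt a b : 0 < a -> 0 < b -> ex_RInt g a b.
Proof.
  intros Ha Hb. apply (ex_RInt_continuous (V:=R_CompleteNormedModule)). intros z Hz. apply g_cont.
  destruct Hz as [Hz _]. eapply Rlt_le_trans; [|exact Hz].
  unfold Rmin; destruct Rle_dec; lra.
Qed.

Lemma RInt_g_nonneg a b : 0 < a -> a <= b -> 0 <= RInt g a b.
Proof.
  intros Ha Hab. apply RInt_ge_0; auto. apply g_exRInt; lra.
  intros x Hx. left; apply g_pos; lra.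
Qed.

Lemma RInt_exp_scaled a b c : c <> 0 -> is_RInt (fun t => exp (- t) / c) a b ((exp (- a) - exp (- b)) / c).
Proof.
  intros Hc.
  replace ((exp (- a) - exp (- b)) / c) with (minus ((fun t => - exp (- t) / c) b) ((fun t => - exp (- t) / c) a)).
  - apply (is_RInt_derive (V:=R_CompleteNormedModule) (fun t => - exp (- t) / c)).
    + intros x _. auto_derive; auto. field; auto.
    + intros x _. apply (ex_derive_continuous (K:=R_AbsRing) (V:=R_NormedModule)). auto_derive; auto.
  - unfold minus, plus, opp; simpl. field; auto.
Qed.

Lemma RInt_g_tail b c : 0 < b -> b <= c -> RInt g b c <= exp (- b) / b.
Proof.
  intros Hb Hbc.
  assert (H := RInt_exp_scaled b c b (Rgt_not_eq _ _ Hb)).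
  apply Rle_trans with (RInt (fun t => exp (- t) / b) b c).
  - apply RInt_le; auto. apply g_exRInt; lra. eexists; eauto.
    intros x Hx. unfold g, Rdiv. apply Rmult_le_compat_l. left; apply exp_pos.
    apply Rinv_le_contravar; lra.
  - rewrite (is_RInt_unique _ _ _ _ H). unfold Rdiv. apply Rmult_le_compat_r.
    left; apply Rinv_0_lt_compat; lra. assert (0 < exp (- c)) by apply exp_pos. lra.
Qed.

Lemma RInt_g_lower u h : 0 < u -> 0 <= h -> h * g (u + h) <= RInt g u (u + h).
Proof.
  intros Hu Hh.
  apply Rle_trans with (RInt (fun _ => g (u + h)) u (u + h)).
  - rewrite RInt_const. unfold scal; simpl; unfold mult; simpl. right; ring.
  - apply RInt_le. lra. apply ex_RInt_const. apply g_exRInt; lra.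
    intros x Hx. apply g_decr; lra.
Qed.

Lemma RInt_g_upper u h : 0 < u -> 0 <= h -> RInt g u (u + h) <= h * g u.
Proof.
  intros Hu Hh.
  apply Rle_trans with (RInt (fun _ => g u) u (u + h)).
  - apply RInt_le. lra. apply g_exRInt; lra. apply ex_RInt_const.
    intros x Hx. apply g_decr; lra.
  - rewrite RInt_const. unfold scal; simpl; unfold mult; simpl. right; ring.
Qed.

Definition Phi a (n : nat) := RInt g a (INR n + 1).
Definition L a := real (Lim_seq (Phi a)).

Lemma INR_p1_pos n : 0 < INR n + 1.
Proof. pose proof (pos_INR n); lra. Qed.

Lemma Phi_incr a n : 0 < a -> Phi a n <= Phi a (S n).
Proof.
  intros Ha. unfold Phi. rewrite S_INR.
  pose proof (INR_p1_pos n).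
  rewrite <- (RInt_Chasles (V:=R_CompleteNormedModule) g a (INR n + 1) (INR n + 1 + 1)).
  2,3: apply g_exRInt; lra.
  unfold plus; simpl. pose proof (RInt_g_nonneg (INR n + 1) (INR n + 1 + 1)). lra.
Qed.

Lemma Phi_bound a n : 0 < a -> Phi a n <= exp (- a) / a.
Proof.
  intros Ha. unfold Phi. pose proof (INR_p1_pos n).
  destruct (Rle_dec a (INR n + 1)).
  - apply RInt_g_tail; auto.
  - rewrite <- opp_RInt_swap. 2: apply g_exRInt; lra.
    pose proof (RInt_g_nonneg (INR n + 1) a H). unfold opp; simpl.
    assert (0 < exp (- a) / a) by (apply Rdiv_lt_0_compat; auto; apply exp_pos). lra.
Qed.

Lemma L_lim a : 0 < a -> is_lim_seq (Phi a) (L a).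
Proof.
  intros Ha. destruct (ex_finite_lim_seq_incr (Phi a) (exp (- a) / a)) as [l Hl].
  intros n; apply Phi_incr; auto. intros n; apply Phi_bound; auto.
  unfold L. rewrite (is_lim_seq_unique _ _ Hl). simpl. auto.
Qed.

Lemma L_chasles a b : 0 < a -> 0 < b -> L a = RInt g a b + L b.
Proof.
  intros Ha Hb.
  assert (H : is_lim_seq (fun n => RInt g a b + Phi b n) (RInt g a b + L b)).
  { apply is_lim_seq_plus'. apply is_lim_seq_const. apply L_lim; auto. }
  assert (H2 : is_lim_seq (Phi a) (RInt g a b + L b)).
  { eapply is_lim_seq_ext; [|exact H]. intros n. unfold Phi.
    pose proof (INR_p1_pos n).
    rewrite <- (RInt_Chasles (V:=R_CompleteNormedModule) g a b (INR n + 1)).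
    reflexivity. apply g_exRInt; lra. apply g_exRInt; lra. }
  pose proof (L_lim a Ha).
  pose proof (is_lim_seq_unique _ _ H2). pose proof (is_lim_seq_unique _ _ H0).
  rewrite H1 in H3. injection H3. auto.
Qed.

Lemma L_upper b : 0 < b -> L b <= exp (- b) / b.
Proof.
  intros Hb. pose proof (L_lim b Hb).
  assert (Rbar_le (L b) (exp (- b) / b)).
  { eapply is_lim_seq_le; [|exact H|apply is_lim_seq_const]. intros n; apply Phi_bound; auto. }
  simpl in H0. auto.
Qed.

Lemma L_ge_RInt b c : 0 < b -> b <= c -> RInt g b c <= L b.
Proof.
  intros Hb Hc. destruct (archimed_cor1 (/ c)) as [N [HN HN0]].
  apply Rinv_0_lt_compat; lra.
  pose proof (L_lim b Hb).
  apply Rle_trans with (Phi b N).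
  - unfold Phi. assert (c <= INR N + 1).
    { assert (0 < INR N). { apply lt_0_INR; lia. }
      destruct (Rle_dec c (INR N)). lra.
      assert (/ c < / INR N). apply Rinv_lt_contravar. apply Rmult_lt_0_compat; lra. lra. lra. }
    rewrite <- (RInt_Chasles (V:=R_CompleteNormedModule) g b c (INR N + 1)).
    2,3: apply g_exRInt; lra.
    unfold plus; simpl. pose proof (RInt_g_nonneg c (INR N + 1)). lra.
  - apply is_lim_seq_incr_compare; auto. intros n; apply Phi_incr; auto.
Qed.

Lemma L_pos b : 0 < b -> 0 < L b.
Proof.
  intros Hb. apply Rlt_le_trans with (RInt g b (b + 1)).
  - apply Rlt_le_trans with (1 * g (b + 1)). rewrite Rmult_1_l. apply g_pos; lra.
    apply RInt_g_lower; lra.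
  - apply L_ge_RInt; lra.
Qed.

Lemma E1_L a : 0 < a -> Defs.E1 a = L a.
Proof.
  intros Ha. unfold Defs.E1. change (fun t => exp (- t) / t) with g.
  apply is_RInt_gen_unique.
  intros P [eps HP].
  apply Filter_prod with (Q := fun x => x = a) (R := fun b => Rmax a (2 / eps) < b).
  - reflexivity.
  - exists (Rmax a (2 / eps)). auto.
  - intros x y -> Hy. exists (RInt g a y). split.
    + apply (RInt_correct (V:=R_CompleteNormedModule)). apply g_exRInt; auto.
      pose proof (Rmax_l a (2/eps)); lra.
    + apply HP. pose proof (Rmax_l a (2/eps)). pose proof (Rmax_r a (2/eps)).
      pose proof (cond_pos eps).
      rewrite (L_chasles a y) by lra.
      pose proof (L_upper y). pose proof (L_pos y).
      assert (exp (- y) / y <= 1 / y).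
      { unfold Rdiv. apply Rmult_le_compat_r. left; apply Rinv_0_lt_compat; lra.
        rewrite <- exp_0. left; apply exp_increasing; lra. }
      assert (1 / y < eps).
      { assert (eps * (2 / eps) = 2) by (field; lra).
        assert (eps * (2 / eps) < eps * y) by (apply Rmult_lt_compat_l; lra).
        apply Rmult_lt_reg_r with y. lra. replace (1 / y * y) with 1 by (field; lra). lra. }
      unfold ball; simpl; unfold AbsRing_ball, abs, minus, plus, opp; simpl.
      rewrite Rabs_left1. lra. lra.
Qed.

Definition Fl x := x * L x.
Definition D x := L x - exp (- x).

Lemma locally_pos x : 0 < x -> locally x (fun y => 0 < y).
Proof.
  intros Hx. exists (mkposreal x Hx). intros y Hy.
  unfold ball in Hy; simpl in Hy; unfold AbsRing_ball, abs, minus, plus, opp in Hy; simpl in Hy.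
  apply Rabs_lt_between in Hy. lra.
Qed.

Lemma L_dpl x : 0 < x -> derivable_pt_lim L x (- g x).
Proof.
  intros Hx. apply is_derive_Reals.
  assert (H : is_derive (fun y => RInt g y (x + 1)) x (opp (g x))).
  { apply (is_derive_RInt' (V:=R_NormedModule) g _ x (x + 1)).
    - generalize (locally_pos x Hx). apply filter_imp. intros y Hy.
      apply (RInt_correct (V:=R_CompleteNormedModule)). apply g_exRInt; lra.
    - apply g_cont; auto. }
  assert (H2 : is_derive (fun y => RInt g y (x + 1) + L (x + 1)) x (opp (g x) + 0)).
  { apply is_derive_Reals. apply is_derive_Reals in H.
    apply (derivable_pt_lim_plus (fun y => RInt g y (x + 1)) (fun _ => L (x + 1))); auto.
    apply derivable_pt_lim_const. }
  rewrite Rplus_0_r in H2.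
  eapply is_derive_ext_loc; [|exact H2].
  generalize (locally_pos x Hx). apply filter_imp. intros y Hy.
  rewrite (L_chasles y (x + 1)); lra.
Qed.

Lemma Fl_dpl x : 0 < x -> derivable_pt_lim Fl x (D x).
Proof.
  intros Hx.
  assert (H := derivable_pt_lim_mult id L x 1 (- g x) (derivable_pt_lim_id x) (L_dpl x Hx)).
  replace (D x) with (1 * L x + id x * - g x). exact H.
  unfold D, id, g. field. lra.
Qed.

Lemma D_dpl x : 0 < x -> derivable_pt_lim D x (exp (- x) - g x).
Proof.
  intros Hx.
  assert (H1 : derivable_pt_lim (fun y => exp (- y)) x (- exp (- x))).
  { apply is_derive_Reals. auto_derive; auto. ring. }
  assert (H := derivable_pt_lim_minus L (fun y => exp (- y)) x _ _ (L_dpl x Hx) H1).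
  replace (exp (- x) - g x) with (- g x - - exp (- x)) by ring. exact H.
Qed.

Lemma D_neg_gt1 x : 1 < x -> D x < 0.
Proof.
  intros Hx. unfold D. pose proof (L_upper x ltac:(lra)).
  assert (exp (- x) / x < exp (- x)).
  { pose proof (exp_pos (- x)). apply Rmult_lt_reg_r with x. lra.
    replace (exp (- x) / x * x) with (exp (- x)) by (field; lra). nra. }
  lra.
Qed.

Lemma Dp_neg c : 0 < c < 1 -> exp (- c) - g c < 0.
Proof.
  intros Hc. unfold g. pose proof (exp_pos (- c)).
  assert (exp (- c) < exp (- c) / c).
  { apply Rmult_lt_reg_r with c. lra.
    replace (exp (- c) / c * c) with (exp (- c)) by (field; lra). nra. }
  lra.
Qed.

Lemma D_decr x y : 0 < x -> x < y -> y <= 1 -> D y < D x.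
Proof.
  intros Hx Hxy Hy.
  destruct (MVT_cor2 D (fun c => exp (- c) - g c) x y Hxy) as [c [Hc1 Hc2]].
  intros c Hc. apply D_dpl; lra.
  pose proof (Dp_neg c ltac:(lra)). nra.
Qed.

Section Alpha.
Variable alpha : R.
Hypothesis Ha : 0 < alpha.
Hypothesis Hmax : forall x, 0 < x -> Fl x <= Fl alpha.

Lemma D_alpha : D alpha = 0.
Proof.
  set (pr := exist (fun l => derivable_pt_lim Fl alpha l) (D alpha) (Fl_dpl alpha Ha) : derivable_pt Fl alpha).
  rewrite <- (derive_pt_eq_0 Fl alpha (D alpha) pr (Fl_dpl alpha Ha)).
  apply (deriv_maximum Fl 0 (alpha + 1) alpha pr Ha ltac:(lra)).
  intros x Hx _. apply Hmax; auto.
Qed.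

Lemma alpha_le1 : alpha <= 1.
Proof.
  destruct (Rle_dec alpha 1); auto. pose proof (D_neg_gt1 alpha ltac:(lra)).
  rewrite D_alpha in H. lra.
Qed.

Lemma D_pos_before x : 0 < x < alpha -> 0 < D x.
Proof.
  intros Hx. pose proof (D_decr x alpha ltac:(lra) ltac:(lra) alpha_le1).
  rewrite D_alpha in H. auto.
Qed.

Lemma D_neg_after x : alpha < x -> D x < 0.
Proof.
  intros Hx. destruct (Rle_dec x 1).
  - pose proof (D_decr alpha x Ha Hx r). rewrite D_alpha in H. auto.
  - apply D_neg_gt1; lra.
Qed.

Lemma Fl_incr x y : 0 < x -> x < y -> y <= alpha -> Fl x < Fl y.
Proof.
  intros Hx Hxy Hy.
  destruct (MVT_cor2 Fl D x y Hxy) as [c [Hc1 Hc2]].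
  intros c Hc. apply Fl_dpl; lra.
  pose proof (D_pos_before c ltac:(lra)). nra.
Qed.

Lemma Fl_decr x y : alpha <= x -> x < y -> Fl y < Fl x.
Proof.
  intros Hx Hxy.
  destruct (MVT_cor2 Fl D x y Hxy) as [c [Hc1 Hc2]].
  intros c Hc. apply Fl_dpl; lra.
  pose proof (D_neg_after c ltac:(lra)). nra.
Qed.

Lemma Fl_far d x : 0 < d < alpha -> 0 < x -> d <= Rabs (x - alpha) ->
  Fl x <= Rmax (Fl (alpha - d)) (Fl (alpha + d)).
Proof.
  intros Hd Hx Hxd.
  destruct (Rle_dec x alpha).
  - rewrite Rabs_left1 in Hxd by lra.
    apply Rle_trans with (Fl (alpha - d)); [|apply Rmax_l].
    destruct (Req_dec x (alpha - d)). subst; lra. left; apply Fl_incr; lra.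
  - rewrite Rabs_right in Hxd by lra.
    apply Rle_trans with (Fl (alpha + d)); [|apply Rmax_r].
    destruct (Req_dec x (alpha + d)). subst; lra. left; apply Fl_decr; lra.
Qed.

Lemma Fl_gap d : 0 < d < alpha -> Rmax (Fl (alpha - d)) (Fl (alpha + d)) < Fl alpha.
Proof.
  intros Hd. apply Rmax_lub_lt.
  apply Fl_incr; lra. apply Fl_decr; lra.
Qed.

End Alpha.

Lemma Fl_cont a : 0 < a -> forall eps, 0 < eps -> exists d, 0 < d /\
  forall y, Rabs (y - a) < d -> Rabs (Fl y - Fl a) < eps.
Proof.
  intros Ha eps He.
  assert (Hc : continuity_pt Fl a).
  { apply derivable_continuous_pt. exists (D a). apply Fl_dpl; auto. }
  destruct (Hc eps He) as [d [Hd H]].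
  exists d. split; auto. intros y Hy.
  destruct (Req_dec y a). subst. unfold Rminus; rewrite Rplus_opp_r, Rabs_R0; auto.
  apply (H y). split. split. exact I. auto. exact Hy.
Qed.

Lemma Fl_nonneg x : 0 < x -> 0 <= Fl x.
Proof. intros Hx. unfold Fl. pose proof (L_pos x Hx). nra. Qed.

Lemma Fl_le_exp x : 0 < x -> Fl x <= exp (- x).
Proof.
  intros Hx. unfold Fl. pose proof (L_upper x Hx).
  replace (exp (- x)) with (x * (exp (- x) / x)) by (field; lra).
  apply Rmult_le_compat_l; lra.
Qed.

Lemma ln_bounds th : 0 < th < 1 -> 1 - th <= - ln th /\ th * (- ln th) <= 1 - th /\ 0 < - ln th.
Proof.
  intros Hth.
  assert (H1 : ln th <= th - 1).
  { rewrite <- (ln_exp (th - 1)). apply ln_le; auto. lra. pose proof (exp_ineq1_le (th - 1)). lra. }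
  assert (H2 : ln (/ th) <= / th - 1).
  { rewrite <- (ln_exp (/ th - 1)). apply ln_le; auto. apply Rinv_0_lt_compat; lra.
    pose proof (exp_ineq1_le (/ th - 1)). lra. }
  rewrite ln_Rinv in H2 by lra.
  assert (0 < - ln th). { assert (ln th < 0). rewrite <- ln_1. apply ln_increasing; lra. lra. }
  repeat split; try lra.
  apply Rmult_le_reg_r with (/ th). apply Rinv_0_lt_compat; lra.
  replace (th * - ln th * / th) with (- ln th) by (field; lra).
  replace ((1 - th) * / th) with (/ th - 1) by (field; lra). lra.
Qed.

Lemma pow_le1 x n : 0 <= x <= 1 -> x ^ n <= 1.
Proof.
  intros Hx. induction n. simpl; lra. simpl.
  assert (0 <= x ^ n) by (apply pow_le; lra). nra.
Qed.

Lemma pow_exp_ln th m : 0 < th -> th ^ m = exp (- (- ln th * INR m)).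
Proof.
  intros Hth. rewrite <- Rpower_pow by auto. unfold Rpower. f_equal. ring.
Qed.

Section Series.
Variable th : R.
Hypothesis Hth : 0 < th < 1.
Variable r : nat.
Hypothesis Hr : (1 <= r)%nat.
Let h := - ln th.
Let a := fun k : nat => th ^ (k + r) / INR (k + r).
Let p := fun k : nat => h * INR (k + r).

Lemma h_pos : 0 < h.
Proof. unfold h. apply ln_bounds; auto. Qed.

Lemma p_pos k : 0 < p k.
Proof. unfold p. apply Rmult_lt_0_compat. apply h_pos. apply lt_0_INR. lia. Qed.

Lemma p_S k : p (S k) = p k + h.
Proof. unfold p. replace (S k + r)%nat with (S (k + r)) by lia. rewrite S_INR. ring. Qed.

Lemma a_eq k : a k = h * g (p k).
Proof.
  unfold a, g, p. rewrite (pow_exp_ln th (k + r)) by lra. fold h.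
  pose proof h_pos. assert (0 < INR (k + r)) by (apply lt_0_INR; lia).
  field. lra.
Qed.

Lemma a_nonneg k : 0 <= a k.
Proof. rewrite a_eq. pose proof h_pos. pose proof (g_pos _ (p_pos k)). nra. Qed.

Lemma claimA n : RInt g (p 0) (p (S n)) <= sum_n a n.
Proof.
  pose proof h_pos.
  induction n.
  - rewrite sum_O, p_S, a_eq. apply RInt_g_upper. apply p_pos. lra.
  - rewrite sum_Sn. unfold plus; simpl.
    rewrite <- (RInt_Chasles (V:=R_CompleteNormedModule) g (p 0) (p (S n)) (p (S (S n)))).
    2,3: apply g_exRInt; apply p_pos.
    unfold plus; simpl. rewrite (p_S (S n)), a_eq.
    pose proof (RInt_g_upper (p (S n)) h (p_pos _) ltac:(lra)). lra.
Qed.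

Lemma claimB n : sum_n a n <= a 0 + RInt g (p 0) (p n).
Proof.
  pose proof h_pos.
  induction n.
  - rewrite sum_O, RInt_point. unfold zero; simpl. lra.
  - rewrite sum_Sn. unfold plus; simpl.
    rewrite <- (RInt_Chasles (V:=R_CompleteNormedModule) g (p 0) (p n) (p (S n))).
    2,3: apply g_exRInt; apply p_pos.
    unfold plus; simpl. rewrite a_eq, (p_S n).
    pose proof (RInt_g_lower (p n) h (p_pos _) ltac:(lra)). lra.
Qed.

Lemma a_ex : ex_series a.
Proof.
  apply (ex_series_le (K:=R_AbsRing) (V:=R_CompleteNormedModule) a (fun n => th ^ n)).
  - intros n. unfold norm; simpl; unfold abs; simpl. rewrite Rabs_right by (apply Rle_ge, a_nonneg).
    unfold a. rewrite pow_add.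
    assert (1 <= INR (n + r)). { replace 1 with (INR 1) by reflexivity. apply le_INR; lia. }
    assert (0 < th ^ n) by (apply pow_lt; lra).
    assert (th ^ r <= 1) by (apply pow_le1; lra).
    assert (0 <= th ^ r) by (apply pow_le; lra).
    apply Rle_trans with (th ^ n * th ^ r). 
    + unfold Rdiv. rewrite <- (Rmult_1_r (th ^ n * th ^ r)) at 2. apply Rmult_le_compat_l. nra.
      rewrite <- Rinv_1. apply Rinv_le_contravar; lra.
    + nra.
  - apply ex_series_geom. rewrite Rabs_right; lra.
Qed.

Lemma is_lim_sum : is_lim_seq (sum_n a) (Series a).
Proof. apply (Series_correct a a_ex). Qed.

Lemma Series_lower : L (p 0) <= Series a.
Proof.
  pose proof h_pos.
  assert (Hn : forall n, L (p 0) <= Series a + / p (S n)).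
  { intros n. rewrite (L_chasles (p 0) (p (S n))) by apply p_pos.
    pose proof (claimA n).
    assert (sum_n a n <= Series a).
    { apply is_lim_seq_incr_compare. apply is_lim_sum. intros m. rewrite sum_Sn.
      unfold plus; simpl. pose proof (a_nonneg (S m)). lra. }
    pose proof (L_upper _ (p_pos (S n))).
    assert (exp (- p (S n)) / p (S n) <= / p (S n)).
    { unfold Rdiv. rewrite <- (Rmult_1_l (/ p (S n))) at 2. apply Rmult_le_compat_r.
      left; apply Rinv_0_lt_compat, p_pos. rewrite <- exp_0. 
      pose proof (p_pos (S n)). left; apply exp_increasing; lra. }
    lra. }
  destruct (Rle_dec (L (p 0)) (Series a)) as [|Hc]; auto.
  destruct (archimed_cor1 (h * (L (p 0) - Series a))) as [N [HN HN0]].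
  apply Rmult_lt_0_compat; lra.
  specialize (Hn N).
  assert (h * INR N <= p (S N)).
  { unfold p. apply Rmult_le_compat_l. lra. apply le_INR. lia. }
  assert (0 < INR N) by (apply lt_0_INR; lia).
  assert (/ p (S N) <= / (h * INR N)). { apply Rinv_le_contravar. nra. auto. }
  assert (/ (h * INR N) < L (p 0) - Series a).
  { rewrite Rinv_mult. apply Rmult_lt_reg_l with h. auto.
    replace (h * (/ h * / INR N)) with (/ INR N) by (field; lra). auto. }
  lra.
Qed.

Lemma Series_upper : Series a <= a 0 + L (p 0).
Proof.
  assert (Rbar_le (Series a) (a 0 + L (p 0))).
  { eapply is_lim_seq_le; [|apply is_lim_sum|apply is_lim_seq_const].
    intros n. pose proof (claimB n).
    destruct n. rewrite RInt_point in H. unfold zero in H; simpl in H.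
    pose proof (L_pos (p 0) (p_pos 0)). lra.
    pose proof (L_ge_RInt (p 0) (p (S n)) (p_pos 0)). 
    assert (p 0 <= p (S n)). { unfold p. pose proof h_pos. apply Rmult_le_compat_l. lra. apply le_INR. lia. }
    specialize (H0 H1). lra. }
  simpl in H. auto.
Qed.

End Series.

Lemma Pr_bounds th r : 0 < th < 1 -> (1 <= r)%nat ->
  th * Fl (- ln th * INR r) <= Pr r th /\ Pr r th <= (1 - th) * th ^ r + Fl (- ln th * INR r).
Proof.
  intros Hth Hr.
  pose proof (Series_lower th Hth r Hr) as Hlo.
  pose proof (Series_upper th Hth r Hr) as Hup.
  cbv beta in Hlo, Hup. simpl (0 + r)%nat in Hlo, Hup.
  destruct (ln_bounds th Hth) as [Ht1 [Ht2 Hh]].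
  set (h := - ln th) in *.
  set (S := Series (fun k : nat => th ^ (k + r) / INR (k + r))) in *.
  assert (HR : 0 < INR r) by (apply lt_0_INR; lia).
  assert (HPr : Pr r th = INR r * (1 - th) * S) by (destruct r; [lia|reflexivity]).
  rewrite HPr. unfold Fl.
  pose proof (L_pos (h * INR r)) as HL. assert (0 < h * INR r) by nra. specialize (HL H).
  split.
  - apply Rle_trans with (INR r * (1 - th) * L (h * INR r)).
    + replace (INR r * (1 - th) * L (h * INR r)) with ((1 - th) / h * (h * INR r * L (h * INR r))) by (field; lra).
      apply Rmult_le_compat_r. nra.
      apply Rmult_le_reg_r with h. auto. replace ((1 - th) / h * h) with (1 - th) by (field; lra). lra.
    + apply Rmult_le_compat_l; [|lra]. nra.
  - apply Rle_trans with (INR r * (1 - th) * (th ^ r / INR r + L (h * INR r))).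
    + apply Rmult_le_compat_l; [nra|lra].
    + replace (INR r * (1 - th) * (th ^ r / INR r + L (h * INR r))) with
        ((1 - th) * th ^ r + (1 - th) / h * (h * INR r * L (h * INR r))) by (field; lra).
      apply Rplus_le_compat_l.
      rewrite <- (Rmult_1_l (h * INR r * L (h * INR r))) at 2.
      apply Rmult_le_compat_r. nra.
      apply Rmult_le_reg_r with h. auto. replace ((1 - th) / h * h) with (1 - th) by (field; lra). lra.
Qed.

Lemma Fl_pos x : 0 < x -> 0 < Fl x.
Proof. intros Hx. unfold Fl. pose proof (L_pos x Hx). nra. Qed.

Lemma Fl_le1 x : 0 < x -> Fl x <= 1.
Proof.
  intros Hx. pose proof (Fl_le_exp x Hx). rewrite <- exp_0 at 1.
  assert (exp (- x) < exp 0) by (apply exp_increasing; lra). lra.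
Qed.

Lemma Pr_upper2 th r : 0 < th < 1 -> (1 <= r)%nat -> Pr r th <= 2 * th ^ r.
Proof.
  intros Hth Hr. destruct (Pr_bounds th r Hth Hr) as [_ H].
  destruct (ln_bounds th Hth) as [_ [_ Hh]].
  assert (0 < INR r) by (apply lt_0_INR; lia).
  pose proof (Fl_le_exp (- ln th * INR r) ltac:(nra)) as He.
  rewrite <- pow_exp_ln in He by lra.
  assert (0 <= th ^ r) by (apply pow_le; lra). nra.
Qed.

Lemma Pr_upper th r : 0 < th < 1 -> (1 <= r)%nat -> Pr r th <= (1 - th) + Fl (- ln th * INR r).
Proof.
  intros Hth Hr. destruct (Pr_bounds th r Hth Hr) as [_ H].
  assert (th ^ r <= 1) by (apply pow_le1; lra).
  assert (0 <= th ^ r) by (apply pow_le; lra). nra.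
Qed.

Lemma finite_argmax (f : nat -> R) N : exists r, (r <= N)%nat /\ forall r', (r' <= N)%nat -> f r' <= f r.
Proof.
  induction N.
  - exists 0%nat. split; auto. intros r' Hr'. replace r' with 0%nat by lia. lra.
  - destruct IHN as [r [Hr H]].
    destruct (Rle_dec (f (S N)) (f r)).
    + exists r. split. lia. intros r' Hr'. destruct (Nat.eq_dec r' (S N)). subst; auto. apply H; lia.
    + exists (S N). split. lia. intros r' Hr'. destruct (Nat.eq_dec r' (S N)). subst; lra.
      specialize (H r' ltac:(lia)). lra.
Qed.

Lemma exists_argmax th : 0 < th < 1 -> exists r, forall r', Pr r' th <= Pr r th.
Proof.
  intros Hth.
  destruct (Pr_bounds th 1 Hth ltac:(lia)) as [H1 _].
  destruct (ln_bounds th Hth) as [_ [_ Hh]].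
  pose proof (Fl_pos (- ln th * INR 1) ltac:(simpl; lra)).
  set (m := Pr 1 th) in *.
  assert (Hm : 0 < m) by nra.
  destruct (pow_lt_1_zero th ltac:(rewrite Rabs_right; lra) (m / 2) ltac:(lra)) as [N0 HN0].
  destruct (finite_argmax (fun r => Pr r th) (Nat.max N0 1)) as [r [Hr Hmax]].
  exists r. intros r'.
  destruct (Compare_dec.le_lt_dec r' (Nat.max N0 1)). apply Hmax; auto.
  pose proof (Pr_upper2 th r' Hth ltac:(lia)).
  specialize (HN0 r' ltac:(lia)). rewrite Rabs_right in HN0 by (apply Rle_ge, pow_le; lra).
  specialize (Hmax 1%nat ltac:(lia)). fold m in Hmax. lra.
Qed.

Lemma Pmax_eq th r : (forall r', Pr r' th <= Pr r th) -> Pmax th = Pr r th.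
Proof.
  intros H. unfold Pmax.
  rewrite (is_sup_seq_unique (fun r => Pr r th) (Pr r th)). reflexivity.
  intros eps. split.
  - intros n. simpl. pose proof (H n). pose proof (cond_pos eps). lra.
  - exists r. simpl. pose proof (cond_pos eps). lra.
Qed.

Lemma exists_grid h al : 0 < h -> 0 < al -> exists n, (1 <= n)%nat /\ al <= h * INR n <= al + h.
Proof.
  intros Hh Hal. destruct (archimed (al / h)) as [H1 H2].
  assert (Hx : 0 < al / h) by (apply Rdiv_lt_0_compat; auto).
  assert (Hz : (0 < up (al / h))%Z) by (apply lt_IZR; simpl; lra).
  exists (Z.to_nat (up (al / h))).
  rewrite INR_IZR_INZ, Z2Nat.id by lia.
  split. lia.
  assert (Hal' : al = h * (al / h)) by (field; lra).
  set (x := al / h) in *. set (z := IZR (up x)) in *.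
  split; nra.
Qed.

Lemma LB al : 0 < al -> forall eps, 0 < eps -> exists d, 0 < d /\
  forall th, 1 - d < th < 1 -> exists r, Fl al - eps < Pr r th.
Proof.
  intros Hal eps He.
  destruct (Fl_cont al Hal (eps / 2) ltac:(lra)) as [dl [Hdl Hc]].
  exists (Rmin (Rmin (dl / 2) (eps / 2)) (1 / 2)). split.
  { apply Rmin_pos. apply Rmin_pos; lra. lra. }
  intros th Hth.
  pose proof (Rmin_l (Rmin (dl / 2) (eps / 2)) (1 / 2)).
  pose proof (Rmin_r (Rmin (dl / 2) (eps / 2)) (1 / 2)).
  pose proof (Rmin_l (dl / 2) (eps / 2)). pose proof (Rmin_r (dl / 2) (eps / 2)).
  assert (Hth' : 0 < th < 1) by lra.
  destruct (ln_bounds th Hth') as [Hb1 [Hb2 Hh]].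
  set (h := - ln th) in *.
  assert (h < dl).
  { assert (th * h < th * dl). nra. nra. }
  destruct (exists_grid h al Hh Hal) as [n [Hn Hgrid]].
  exists n.
  destruct (Pr_bounds th n Hth' Hn) as [Hlo _]. fold h in Hlo.
  specialize (Hc (h * INR n)). assert (Rabs (h * INR n - al) < dl).
  { rewrite Rabs_right by lra. lra. }
  specialize (Hc H4). apply Rabs_lt_between in Hc.
  pose proof (Fl_le1 al Hal).
  assert (th * (Fl al - eps / 2) < th * Fl (h * INR n)) by (apply Rmult_lt_compat_l; lra).
  pose proof (Fl_nonneg al Hal).
  nra.
Qed.

Lemma F_Fl x : 0 < x -> F x = Fl x.
Proof. intros Hx. unfold F, Fl. rewrite E1_L; auto. Qed.

Lemma at_left_intro (P : R -> Prop) d : 0 < d -> (forall th, 1 - d < th < 1 -> P th) -> at_left 1 P.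
Proof.
  intros Hd H. exists (mkposreal d Hd). intros y Hy Hy1.
  unfold ball in Hy; simpl in Hy; unfold AbsRing_ball, abs, minus, plus, opp in Hy; simpl in Hy.
  apply Rabs_lt_between in Hy. apply H. lra.
Qed.

Lemma ball_R_intro (l x : R) (eps : posreal) : Rabs (x - l) < eps -> ball l eps x.
Proof. intros H. unfold ball; simpl; unfold AbsRing_ball, abs, minus, plus, opp; simpl. exact H. Qed.

Theorem theorem3p2 (alpha : R)
  (Halpha : 0 < alpha /\ (forall x, 0 < x -> F x <= F alpha)) :
  (forall th, 0 < th < 1 -> exists r : nat, forall r' : nat, Pr r' th <= Pr r th)
  /\ (forall rstar : R -> nat,
        (forall th, 0 < th < 1 -> forall r : nat, Pr r th <= Pr (rstar th) th) ->
        filterlim (fun th => (1 - th) * INR (rstar th)) (at_left 1) (locally alpha))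
  /\ filterlim Pmax (at_left 1) (locally (F alpha)).
Proof.
  destruct Halpha as [Ha HF].
  assert (Hmax : forall x, 0 < x -> Fl x <= Fl alpha).
  { intros x Hx. rewrite <- !F_Fl; auto. }
  rewrite F_Fl by auto.
  set (beta := Fl alpha).
  assert (Hbpos : 0 < beta) by (apply Fl_pos; auto).
  assert (Hall : forall th r, 0 < th < 1 -> Pr r th <= (1 - th) + beta).
  { intros th r Hth. destruct r. simpl. lra.
    destruct (ln_bounds th Hth) as [_ [_ Hh]].
    pose proof (Pr_upper th (S r) Hth ltac:(lia)).
    assert (0 < INR (S r)) by (apply lt_0_INR; lia).
    pose proof (Hmax (- ln th * INR (S r)) ltac:(nra)). fold beta in H1. lra. }
  split; [|split].
  - apply exists_argmax.
  - intros rstar Hopt.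
    apply filterlim_locally. intros eps.
    pose proof (cond_pos eps) as He.
    set (d1 := Rmin (eps / 2) (alpha / 2)).
    assert (Hd1 : 0 < d1 < alpha /\ d1 <= eps / 2).
    { unfold d1. pose proof (Rmin_l (eps/2) (alpha/2)). pose proof (Rmin_r (eps/2) (alpha/2)).
      split; [split|]; try lra. apply Rmin_pos; lra. }
    set (Mx := Rmax (Fl (alpha - d1)) (Fl (alpha + d1))).
    assert (HMx : Mx < beta) by (apply Fl_gap; auto; lra).
    assert (HMx0 : 0 <= Mx).
    { unfold Mx. apply Rle_trans with (Fl (alpha + d1)). apply Fl_nonneg; lra. apply Rmax_r. }
    set (eta := beta - Mx).
    destruct (LB alpha Ha (eta / 2) ltac:(unfold eta; lra)) as [d0 [Hd0 HLB]].
    set (K := alpha + d1).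
    assert (HK : 0 < K) by (unfold K; lra).
    apply at_left_intro with (Rmin (Rmin d0 (eta / 2)) (Rmin (eps / (2 * K)) (1 / 2))).
    { apply Rmin_pos; apply Rmin_pos; try (unfold eta; lra). apply Rdiv_lt_0_compat; lra. }
    intros th Hth.
    pose proof (Rmin_l (Rmin d0 (eta / 2)) (Rmin (eps / (2 * K)) (1 / 2))).
    pose proof (Rmin_r (Rmin d0 (eta / 2)) (Rmin (eps / (2 * K)) (1 / 2))).
    pose proof (Rmin_l d0 (eta / 2)). pose proof (Rmin_r d0 (eta / 2)).
    pose proof (Rmin_l (eps / (2 * K)) (1 / 2)). pose proof (Rmin_r (eps / (2 * K)) (1 / 2)).
    assert (Hth' : 0 < th < 1) by lra.
    destruct (HLB th ltac:(lra)) as [r0 Hr0]. fold beta in Hr0.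
    pose proof (Hopt th Hth' r0) as Hopt0.
    set (r := rstar th) in *.
    destruct (ln_bounds th Hth') as [Hb1 [Hb2 Hh]].
    set (h := - ln th) in *.
    assert (Ht : 1 - th < eps / (2 * K)) by lra.
    destruct r as [|r'] eqn:Er.
    + simpl in Hopt0. exfalso. unfold eta in *. lra.
    + assert (Hlo : Mx < Fl (h * INR (S r'))).
      { pose proof (Pr_upper th (S r') Hth' ltac:(lia)). fold h in H5. unfold eta in *. lra. }
      assert (HR : 0 < INR (S r')) by (apply lt_0_INR; lia).
      assert (Hclose : Rabs (h * INR (S r') - alpha) < d1).
      { destruct (Rlt_dec (Rabs (h * INR (S r') - alpha)) d1); auto.
        pose proof (Fl_far alpha Ha Hmax d1 (h * INR (S r')) ltac:(lra) ltac:(nra) ltac:(lra)).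
        fold Mx in H5. lra. }
      apply ball_R_intro.
      apply Rabs_lt_between in Hclose.
      assert (Hdiff : 0 <= h * INR (S r') - (1 - th) * INR (S r') <= (1 - th) * (h * INR (S r'))).
      { split. nra. nra. }
      assert ((1 - th) * (h * INR (S r')) <= (1 - th) * K) by (unfold K; apply Rmult_le_compat_l; lra).
      assert ((1 - th) * K < eps / 2).
      { apply Rmult_lt_reg_r with (/ K). apply Rinv_0_lt_compat; lra.
        replace ((1 - th) * K * / K) with (1 - th) by (field; lra).
        replace (eps / 2 * / K) with (eps / (2 * K)) by (field; lra). lra. }
      apply Rabs_lt_between. lra.
  - apply filterlim_locally. intros eps.
    pose proof (cond_pos eps) as He.
    destruct (LB alpha Ha eps He) as [d0 [Hd0 HLB]].
    apply at_left_intro with (Rmin (Rmin d0 (eps / 2)) (1 / 2)).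
    { apply Rmin_pos; [apply Rmin_pos|]; lra. }
    intros th Hth.
    pose proof (Rmin_l d0 (eps / 2)). pose proof (Rmin_r d0 (eps / 2)).
    pose proof (Rmin_l (Rmin d0 (eps / 2)) (1 / 2)). pose proof (Rmin_r (Rmin d0 (eps / 2)) (1 / 2)).
    assert (Hth' : 0 < th < 1) by lra.
    destruct (exists_argmax th Hth') as [r Hr].
    rewrite (Pmax_eq th r Hr).
    destruct (HLB th ltac:(lra)) as [r0 Hr0]. fold beta in Hr0.
    pose proof (Hr r0). pose proof (Hall th r Hth').
    apply ball_R_intro. apply Rabs_lt_between. lra.
Qed.
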